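(* (Hammock Lemma) Let $\tilde f,f,g\in\breve{\mathcal D}$ and $c:=\int f/\int g$ satisfy $g\lhd f$, $\tilde f\le f$ and $\tilde f(x)\le\tilde g(x):=g(x/c)$ for all $x\in[0,1]$. Then $\int Tf-\int Tg<1-\int\tilde f/\int f$.
   Context: $\int f:=\int_0^1f(x)\,dx$. $\breve{\mathcal D}$: the set of continuous, convex, strictly decreasing $f\colon[0,1]\to[0,1]$ with $f(0)=1$, $f(1)=0$; for such $f$, $f^*=f^{-1}$ and $(Tf)(x):=\frac{\int_x^1f^{-1}}{\int f}$. For $f$ and $a>0$, $f_{[a]}(x):=f(ax)$ on $[0,\frac1a]$; for $b>0$, $f_{[a]}-bg$ is considered on $[0,\min\{1,\frac1a\}]$. Sign switches: for continuous $\Delta\colon[c_0,d_0]\to\mathbb R$, a closed subinterval $[c',d']$ with $c_0<c'\le d'<d_0$ and $\Delta([c',d'])=\{0\}$ is a sign switch if there is $\delta\in(0,\min\{c'-c_0,d_0-d'\}]$ with $\Delta(c'-x)\Delta(d'+x)<0$ for all $x\in(0,\delta]$; $\chi\Delta$ is their number. Crossing number $\chi(f,g):=\sup\{\chi(f_{[a]}-bg):a,b>0\}$. Domination $g\lhd f$: $\chi(f,g)=2$ and $g\le f$ pointwise. *)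

(* Defs.v *)
From Stdlib Require Import Reals List ClassicalEpsilon.
From Coquelicot Require Import Coquelicot.
Open Scope R_scope.

(* Functions are total R -> R; only their values on the relevant
   closed intervals matter. *)

Definition inD (f : R -> R) : Prop :=
  (forall x, 0 <= x <= 1 ->
     filterlim f (within (fun y => 0 <= y <= 1) (locally x)) (locally (f x))) /\
  (forall x, 0 <= x <= 1 -> 0 <= f x <= 1) /\
  (forall x y t, 0 <= x <= 1 -> 0 <= y <= 1 -> 0 <= t <= 1 ->
     f (t * x + (1 - t) * y) <= t * f x + (1 - t) * f y) /\
  (forall x y, 0 <= x <= 1 -> 0 <= y <= 1 -> x < y -> f y < f x) /\
  f 0 = 1 /\ f 1 = 0.

Definition finv (f : R -> R) (y : R) : R :=
  epsilon (inhabits 0) (fun x => 0 <= x <= 1 /\ f x = y).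

Definition T (f : R -> R) (x : R) : R :=
  RInt (finv f) x 1 / RInt f 0 1.

Definition fscale (f : R -> R) (a : R) (x : R) : R := f (a * x).

Definition sign_switch (D : R -> R) (c0 d0 c' d' : R) : Prop :=
  c0 < c' <= d' /\ d' < d0 /\
  (forall y, c' <= y <= d' -> D y = 0) /\
  exists delta, 0 < delta /\ delta <= Rmin (c' - c0) (d0 - d') /\
    forall x, 0 < x <= delta -> D (c' - x) * D (d' + x) < 0.

Definition has_switches (D : R -> R) (c0 d0 : R) (n : nat) : Prop :=
  exists l : list (R * R)%type, NoDup l /\ List.length l = n%nat /\
    List.Forall (fun p => sign_switch D c0 d0 (fst p) (snd p)) l.

(* crossing number chi(f,g) = sup { chi(f_[a] - b g) : a, b > 0 },
   an element of N u {+oo}, computed as a supremum in Rbar, where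
   f_[a] - b g is considered on [0, min(1, 1/a)]. *)
Definition crossing (f g : R -> R) : Rbar :=
  Lub_Rbar (fun r => exists (n : nat) (a b : R), 0 < a /\ 0 < b /\ r = INR n /\
     has_switches (fun x => fscale f a x - b * g x) 0 (Rmin 1 (/ a)) n).

Definition dominated (g f : R -> R) : Prop :=
  crossing f g = Finite 2 /\ (forall x, 0 <= x <= 1 -> g x <= f x).

(* Main.v *)
Require Import Defs.
From Stdlib Require Import Reals Lra Psatz List ClassicalEpsilon Classical.
From Coquelicot Require Import Coquelicot.
Open Scope R_scope.

Definition cl (x:R) := Rmax 0 (Rmin 1 x).
Lemma cl_in x : 0 <= cl x <= 1.
Proof. unfold cl, Rmax, Rmin; repeat destruct Rle_dec; lra. Qed.
Lemma cl_id x : 0<=x<=1 -> cl x = x.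
Proof. unfold cl, Rmax, Rmin; repeat destruct Rle_dec; lra. Qed.
Lemma cl_lip x y : Rabs (cl x - cl y) <= Rabs (x - y).
Proof. unfold cl, Rmax, Rmin, Rabs; repeat destruct Rle_dec; repeat destruct Rcase_abs; lra. Qed.

Lemma ball_R (x y d : R) : ball x d y <-> Rabs (y - x) < d.
Proof. unfold ball; simpl; unfold AbsRing_ball, abs, minus, plus, opp; simpl. tauto. Qed.

Lemma within_eps (f : R -> R) (P : R -> Prop) x :
  filterlim f (within P (locally x)) (locally (f x)) ->
  forall eps, 0 < eps -> exists d, 0 < d /\ forall y, P y -> Rabs (y - x) < d -> Rabs (f y - f x) < eps.
Proof.
  intros H eps He.
  destruct (proj1 (filterlim_locally f (f x)) H (mkposreal eps He)) as [d Hd].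
  exists d; split; [apply cond_pos|].
  intros y Py Hy. specialize (Hd y). apply ball_R. apply Hd; [apply ball_R; exact Hy| exact Py].
Qed.

Lemma cpt_eps (f : R -> R) x :
  (forall eps, 0 < eps -> exists d, 0 < d /\ forall y, Rabs (y - x) < d -> Rabs (f y - f x) < eps) ->
  continuity_pt f x.
Proof.
  intros H eps He. destruct (H eps He) as [d [Hd H']]. exists d; split; auto.
  intros y [_ Hy]. simpl in *. unfold R_dist in *. apply H'. exact Hy.
Qed.

Lemma cpt_eps_inv (f : R -> R) x : continuity_pt f x ->
  forall eps, 0 < eps -> exists d, 0 < d /\ forall y, Rabs (y - x) < d -> Rabs (f y - f x) < eps.
Proof.
  intros H eps He. destruct (H eps He) as [d [Hd H']]. exists d; split; auto.
  intros y Hy. destruct (Req_dec y x) as [->|Hne].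
  - unfold Rminus; rewrite Rplus_opp_r, Rabs_R0; lra.
  - apply (H' y). split; [split; [exact I| auto]|]. simpl; unfold R_dist; exact Hy.
Qed.

Lemma cont_of_cpt f x : continuity_pt f x -> continuous f x.
Proof. intro H. apply continuity_pt_filterlim. exact H. Qed.
Lemma cpt_of_cont f x : continuous f x -> continuity_pt f x.
Proof. intro H. apply continuity_pt_filterlim. exact H. Qed.

Section InD.
Variable f : R -> R.
Hypothesis Hf : inD f.

Lemma inD_range x : 0 <= x <= 1 -> 0 <= f x <= 1.
Proof. destruct Hf as (_&H&_). apply H. Qed.
Lemma inD_dec x y : 0 <= x <= 1 -> 0 <= y <= 1 -> x < y -> f y < f x.
Proof. destruct Hf as (_&_&_&H&_). apply H. Qed.
Lemma inD_decle x y : 0 <= x <= 1 -> 0 <= y <= 1 -> x <= y -> f y <= f x.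
Proof. intros. destruct (Req_dec x y) as [->|]; [lra|]. left; apply inD_dec; auto; lra. Qed.
Lemma inD_0 : f 0 = 1. Proof. destruct Hf as (_&_&_&_&H&_). exact H. Qed.
Lemma inD_1 : f 1 = 0. Proof. destruct Hf as (_&_&_&_&_&H). exact H. Qed.
Lemma inD_conv x y t : 0 <= x <= 1 -> 0 <= y <= 1 -> 0 <= t <= 1 ->
     f (t * x + (1 - t) * y) <= t * f x + (1 - t) * f y.
Proof. destruct Hf as (_&_&H&_). apply H. Qed.
Lemma inD_pos x : 0 <= x < 1 -> 0 < f x.
Proof. intros. rewrite <- inD_1. apply inD_dec; lra. Qed.
Lemma inD_inj x y : 0 <= x <= 1 -> 0 <= y <= 1 -> f x = f y -> x = y.
Proof.
  intros. destruct (Rtotal_order x y) as [H2|[H2|H2]]; auto.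
  - pose proof (inD_dec x y); lra.
  - pose proof (inD_dec y x); lra.
Qed.
Lemma inD_ceps x : 0 <= x <= 1 ->
  forall eps, 0 < eps -> exists d, 0 < d /\ forall y, 0 <= y <= 1 -> Rabs (y - x) < d -> Rabs (f y - f x) < eps.
Proof. intros Hx. destruct Hf as (H&_). apply within_eps. apply H; auto. Qed.

Definition fcl (y : R) := f (cl y).
Lemma fcl_cont y : continuity_pt fcl y.
Proof.
  apply cpt_eps. intros eps He.
  destruct (inD_ceps (cl y) (cl_in y) eps He) as [d [Hd H]].
  exists d; split; auto. intros z Hz. unfold fcl. apply H. apply cl_in.
  pose proof (cl_lip z y). lra.
Qed.
Lemma fcl_eq y : 0 <= y <= 1 -> fcl y = f y.
Proof. intros; unfold fcl; rewrite cl_id; auto. Qed.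

Lemma inD_cint x : 0 < x < 1 -> continuity_pt f x.
Proof.
  intros Hx. apply cpt_eps. intros eps He.
  destruct (inD_ceps x ltac:(lra) eps He) as [d [Hd H]].
  exists (Rmin d (Rmin x (1 - x))). split. { unfold Rmin; repeat destruct Rle_dec; lra. }
  intros y Hy. apply H.
  - unfold Rmin, Rabs in *; repeat destruct Rle_dec; repeat destruct Rcase_abs; lra.
  - unfold Rmin in *; repeat destruct Rle_dec; lra.
Qed.

Lemma inD_surj y : 0 <= y <= 1 -> exists x, 0 <= x <= 1 /\ f x = y.
Proof.
  intros Hy.
  assert (Hc : forall z, continuous fcl z) by (intro; apply cont_of_cpt, fcl_cont).
  destruct (IVT_gen_consistent fcl 0 1 y Hc) as [x [Hx Hfx]].
  { rewrite !fcl_eq by lra. rewrite inD_0, inD_1. unfold Rmin, Rmax; repeat destruct Rle_dec; lra. }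
  rewrite Rmin_left, Rmax_right in Hx by lra.
  exists x; split; auto. rewrite <- fcl_eq; auto.
Qed.

Lemma finv_spec y : 0 <= y <= 1 -> 0 <= finv f y <= 1 /\ f (finv f y) = y.
Proof.
  intros Hy. unfold finv. apply epsilon_spec. destruct (inD_surj y Hy) as [x Hx]. exists x; exact Hx.
Qed.
Lemma finv_f x : 0 <= x <= 1 -> finv f (f x) = x.
Proof.
  intros Hx. pose proof (inD_range x Hx) as Hr. destruct (finv_spec _ Hr) as [H1 H2].
  apply inD_inj; auto.
Qed.
Lemma finv_dec y z : 0 <= y <= 1 -> 0 <= z <= 1 -> y <= z -> finv f z <= finv f y.
Proof.
  intros Hy Hz Hyz. destruct (finv_spec y Hy) as [A1 A2]. destruct (finv_spec z Hz) as [B1 B2].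
  destruct (Rle_dec (finv f z) (finv f y)) as [|Hn]; auto.
  assert (f (finv f y) > f (finv f z)) by (apply inD_dec; auto; lra). lra.
Qed.
Lemma finv_0 : finv f 0 = 1.
Proof. rewrite <- inD_1. apply finv_f; lra. Qed.
Lemma finv_1 : finv f 1 = 0.
Proof. rewrite <- inD_0. apply finv_f; lra. Qed.

Lemma finv_ceps y0 : 0 <= y0 <= 1 ->
  forall eps, 0 < eps -> exists d, 0 < d /\ forall y, 0 <= y <= 1 -> Rabs (y - y0) < d -> Rabs (finv f y - finv f y0) < eps.
Proof.
  intros Hy0 eps He.
  destruct (finv_spec y0 Hy0) as [Hx0 Hfx0]. set (x0 := finv f y0) in *.
  set (xl := Rmax 0 (x0 - eps/2)). set (xr := Rmin 1 (x0 + eps/2)).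
  assert (Hxl : 0 <= xl <= 1 /\ xl <= x0 /\ x0 - xl < eps /\ (0 < x0 -> xl < x0)) by
    (unfold xl, Rmax; destruct Rle_dec; lra).
  assert (Hxr : 0 <= xr <= 1 /\ x0 <= xr /\ xr - x0 < eps /\ (x0 < 1 -> x0 < xr)) by
    (unfold xr, Rmin; destruct Rle_dec; lra).
  set (g1 := if Rlt_dec x0 1 then y0 - f xr else 1).
  set (g2 := if Rlt_dec 0 x0 then f xl - y0 else 1).
  assert (Hg1 : 0 < g1).
  { unfold g1; destruct (Rlt_dec x0 1); [|lra]. assert (f xr < f x0) by (apply inD_dec; lra). lra. }
  assert (Hg2 : 0 < g2).
  { unfold g2; destruct (Rlt_dec 0 x0); [|lra]. assert (f x0 < f xl) by (apply inD_dec; lra). lra. }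
  exists (Rmin g1 g2). split. { apply Rmin_glb_lt; auto. }
  intros y Hy Hyd. destruct (finv_spec y Hy) as [Hx Hfx]. set (x := finv f y) in *.
  assert (Hd1 : Rabs (y - y0) < g1) by (pose proof (Rmin_l g1 g2); lra).
  assert (Hd2 : Rabs (y - y0) < g2) by (pose proof (Rmin_r g1 g2); lra).
  destruct (Rle_dec y0 y).
  -
    assert (x <= x0) by (apply finv_dec; auto).
    destruct (Rlt_dec 0 x0) as [Hp|Hp].
    + assert (xl < x).
      { destruct (Rlt_dec xl x) as [|Hn]; auto.
        assert (f x >= f xl) by (destruct (Req_dec x xl) as [->|]; [lra| left; apply inD_dec; lra]).
        unfold g2 in Hd2; destruct (Rlt_dec 0 x0); [|lra].
        rewrite Rabs_right in Hd2 by lra. lra. }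
      rewrite Rabs_left1 by lra. lra.
    + assert (x = 0) by lra. assert (x0 = 0) by lra. rewrite H0, H1. rewrite Rminus_0_r, Rabs_R0. lra.
  - assert (x0 <= x) by (apply finv_dec; auto; lra).
    destruct (Rlt_dec x0 1) as [Hp|Hp].
    + assert (x < xr).
      { destruct (Rlt_dec x xr) as [|Hn]; auto.
        assert (f x <= f xr) by (destruct (Req_dec x xr) as [->|]; [lra| left; apply inD_dec; lra]).
        unfold g1 in Hd1; destruct (Rlt_dec x0 1); [|lra].
        rewrite Rabs_left in Hd1 by lra. lra. }
      rewrite Rabs_right by lra. lra.
    + assert (x = 1) by lra. assert (x0 = 1) by lra. rewrite H0, H1. unfold Rminus. rewrite Rplus_opp_r, Rabs_R0. lra.
Qed.

Definition hcl (y : R) := finv f (cl y).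
Lemma hcl_cont y : continuity_pt hcl y.
Proof.
  apply cpt_eps. intros eps He.
  destruct (finv_ceps (cl y) (cl_in y) eps He) as [d [Hd H]].
  exists d; split; auto. intros z Hz. unfold hcl. apply H. apply cl_in.
  pose proof (cl_lip z y). lra.
Qed.
Lemma hcl_eq y : 0 <= y <= 1 -> hcl y = finv f y.
Proof. intros; unfold hcl; rewrite cl_id; auto. Qed.

End InD.

Lemma exRI (k : R -> R) a b : (forall x, continuity_pt k x) -> ex_RInt k a b.
Proof. intros H. apply (@ex_RInt_continuous R_CompleteNormedModule). intros. apply cont_of_cpt, H. Qed.

Lemma RI_chasles (k : R -> R) a b c : (forall x, continuity_pt k x) ->
  RInt k a b + RInt k b c = RInt k a c.
Proof. intros H. apply (RInt_Chasles k a b c); apply exRI; auto. Qed.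

Lemma RI_const a b c : RInt (fun _ => c) a b = (b - a) * c.
Proof. rewrite RInt_const. reflexivity. Qed.

Lemma RI_le (k1 k2 : R -> R) a b : a <= b -> (forall x, continuity_pt k1 x) -> (forall x, continuity_pt k2 x) ->
  (forall t, a < t < b -> k1 t <= k2 t) -> RInt k1 a b <= RInt k2 a b.
Proof. intros. apply RInt_le; auto; apply exRI; auto. Qed.

Lemma RI_point (k : R -> R) a : RInt k a a = 0.
Proof. rewrite RInt_point. reflexivity. Qed.

Lemma cpt_const c x : continuity_pt (fun _ : R => c) x.
Proof. apply continuity_pt_const. intros u v; reflexivity. Qed.

Lemma RI_bounds (k : R -> R) a b lo hi : a <= b -> (forall x, continuity_pt k x) ->
  (forall t, a < t < b -> lo <= k t <= hi) -> (b - a) * lo <= RInt k a b <= (b - a) * hi.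
Proof.
  intros Hab Hk H. split.
  - rewrite <- RI_const. apply RI_le; auto. apply cpt_const. intros t Ht; apply H; auto.
  - rewrite <- RI_const. apply RI_le; auto. apply cpt_const. intros t Ht; apply H; auto.
Qed.

Section Stair.
Variable f : R -> R.
Hypothesis Hf : inD f.
Variable n : nat.
Hypothesis Hn : (0 < n)%nat.

Let N := INR n.
Let xx (k : nat) := INR k / N.
Let yy (k : nat) := f (xx k).

Lemma N_pos : 0 < N.
Proof. unfold N. apply lt_0_INR; auto. Qed.

Lemma xx_range k : (k <= n)%nat -> 0 <= xx k <= 1.
Proof.
  intros Hk. pose proof N_pos. unfold xx. split.
  - apply Rdiv_le_0_compat; [apply pos_INR|lra].
  - apply (Rmult_le_reg_r N); [lra|]. unfold Rdiv. rewrite Rmult_assoc, Rinv_l by lra.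
    rewrite Rmult_1_r, Rmult_1_l. apply le_INR; auto.
Qed.

Lemma xx_S k : xx (S k) = xx k + 1 / N.
Proof. pose proof N_pos. unfold xx. rewrite S_INR. field. lra. Qed.

Lemma stair k : (k <= n)%nat -> exists L,
  L <= RInt (fcl f) 0 (xx k) <= L + (1 - yy k) / N /\
  L - xx k * yy k <= RInt (hcl f) (yy k) 1 <= L - xx k * yy k + (1 - yy k) / N.
Proof.
  pose proof N_pos as HN.
  induction k as [|k IH]; intros Hk.
  - exists 0. assert (E : xx 0 = 0) by (unfold xx; simpl; unfold Rdiv; ring).
    unfold yy; rewrite E, (inD_0 f Hf), !RI_point. unfold Rdiv; rewrite Rminus_diag, Rmult_0_l. lra.
  - destruct IH as [L [H1 H2]]; [lia|]. unfold yy in *.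
    pose proof (xx_range k ltac:(lia)) as Hk0.
    pose proof (xx_range (S k) Hk) as Hk1.
    pose proof (xx_S k) as HS.
    assert (HN1 : 0 < 1 / N) by (apply Rdiv_lt_0_compat; lra).
    assert (Hy0 := inD_range f Hf _ Hk0). assert (Hy1 := inD_range f Hf _ Hk1).
    assert (Hyy : f (xx (S k)) <= f (xx k)) by (apply (inD_decle f Hf); auto; lra).
    exists (L + f (xx (S k)) / N).
    assert (Hfc : forall x, continuity_pt (fcl f) x) by (intro; apply fcl_cont; auto).
    assert (Hhc : forall x, continuity_pt (hcl f) x) by (intro; apply hcl_cont; auto).
    assert (A : (xx (S k) - xx k) * f (xx (S k)) <= RInt (fcl f) (xx k) (xx (S k)) <= (xx (S k) - xx k) * f (xx k)).
    { apply RI_bounds; auto; [lra|]. intros t Ht. rewrite fcl_eq by (auto; lra).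
      split; apply (inD_decle f Hf); auto; lra. }
    assert (B : (f (xx k) - f (xx (S k))) * xx k <= RInt (hcl f) (f (xx (S k))) (f (xx k)) <= (f (xx k) - f (xx (S k))) * xx (S k)).
    { apply RI_bounds; auto. intros t Ht. rewrite hcl_eq by (auto; lra).
      split.
      - rewrite <- (finv_f f Hf (xx k)) at 1 by auto. apply (finv_dec f Hf); auto; lra.
      - rewrite <- (finv_f f Hf (xx (S k))) by auto. apply (finv_dec f Hf); auto; lra. }
    rewrite <- (RI_chasles (fcl f) 0 (xx k) (xx (S k)) Hfc).
    rewrite <- (RI_chasles (hcl f) (f (xx (S k))) (f (xx k)) 1 Hhc).
    rewrite HS in A, B |- *.
    unfold Rdiv in *. nra.
Qed.

Lemma int_inv_n : Rabs (RInt (fcl f) 0 1 - RInt (hcl f) 0 1) <= 1 / N.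
Proof.
  pose proof N_pos.
  destruct (stair n (le_n n)) as [L [H1 H2]].
  assert (Hx : xx n = 1) by (unfold xx; fold N; field; lra).
  assert (Hy : yy n = 0) by (unfold yy; rewrite Hx; apply inD_1; auto).
  rewrite Hx, Hy in *. unfold Rdiv in *. apply Rabs_le. nra.
Qed.
End Stair.

Lemma int_inv (f : R -> R) : inD f -> RInt f 0 1 = RInt (finv f) 0 1.
Proof.
  intros Hf.
  assert (E1 : RInt f 0 1 = RInt (fcl f) 0 1).
  { apply RInt_ext. intros x Hx. rewrite Rmin_left, Rmax_right in Hx by lra. rewrite fcl_eq; auto; lra. }
  assert (E2 : RInt (finv f) 0 1 = RInt (hcl f) 0 1).
  { apply RInt_ext. intros x Hx. rewrite Rmin_left, Rmax_right in Hx by lra. rewrite hcl_eq; auto; lra. }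
  rewrite E1, E2.
  set (d := RInt (fcl f) 0 1 - RInt (hcl f) 0 1).
  destruct (Req_dec d 0) as [H|H]; [unfold d in H; lra|].
  exfalso.
  assert (Hd : 0 < Rabs d) by (apply Rabs_pos_lt; auto).
  destruct (INR_archimed (Rabs d) 1 Hd) as [n Hn].
  destruct n as [|n]. { simpl in Hn. lra. }
  pose proof (int_inv_n f Hf (S n) ltac:(lia)) as K. fold d in K.
  assert (HN : 0 < INR (S n)) by (apply lt_0_INR; lia).
  assert (Rabs d * INR (S n) <= 1).
  { apply (Rmult_le_reg_r (/ INR (S n))). apply Rinv_0_lt_compat; auto.
    rewrite Rmult_assoc, Rinv_r, Rmult_1_r by lra. lra. }
  lra.
Qed.

Lemma intT (f : R -> R) : inD f ->
  RInt (T f) 0 1 = RInt (fun y => y * hcl f y) 0 1 / RInt f 0 1.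
Proof.
  intros Hf.
  set (F := RInt f 0 1).
  set (h := hcl f).
  assert (Hhc : forall x, continuity_pt h x) by (intro; apply hcl_cont; auto).
  set (H := fun x => RInt h x 1).
  assert (E1 : RInt (T f) 0 1 = RInt (fun x => scal (/ F) (H x)) 0 1).
  { apply RInt_ext. intros x Hx. rewrite Rmin_left, Rmax_right in Hx by lra.
    unfold T. fold F. unfold H. rewrite (RInt_ext (finv f) h x 1).
    - change (RInt h x 1 / F = /F * RInt h x 1). unfold Rdiv. ring.
    - intros t Ht. rewrite Rmin_left, Rmax_right in Ht by lra. unfold h. rewrite hcl_eq; auto; lra. }
  assert (HD : forall x, is_derive H x (opp (h x))).
  { intros x. apply (is_derive_RInt' h H x 1).
    - apply filter_forall. intros a0. apply (@RInt_correct R_CompleteNormedModule). apply exRI; auto.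
    - apply cont_of_cpt; auto. }
  assert (HC : forall x, continuity_pt H x).
  { intros x. apply cpt_of_cont. apply (@ex_derive_continuous R_AbsRing R_NormedModule). eexists; apply HD. }
  set (K := fun x => x * H x).
  set (df := fun x => H x - x * h x).
  assert (KD : forall x, is_derive K x (df x)).
  { intros x. unfold K, df.
    pose proof (is_derive_mult (fun t => t) H x one (opp (h x)) (is_derive_id x) (HD x)) as P.
    assert (P' := P ltac:(intros; apply Rmult_comm)).
    change (plus (mult one (H x)) (mult x (opp (h x)))) with (1 * H x + x * (- h x)) in P'.
    replace (H x - x * h x) with (1 * H x + x * (- h x)) by ring. exact P'. }
  assert (dfc : forall x, continuity_pt df x).
  { intros x. unfold df. apply continuity_pt_minus; auto.
    apply continuity_pt_mult; auto. apply continuity_pt_id. }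
  assert (I1 : is_RInt df 0 1 (minus (K 1) (K 0))).
  { apply (@is_RInt_derive R_CompleteNormedModule). intros; apply KD. intros; apply cont_of_cpt; auto. }
  apply (@is_RInt_unique R_CompleteNormedModule) in I1.
  assert (K1 : minus (K 1) (K 0) = 0).
  { change (K 1 - K 0 = 0). unfold K, H. rewrite RI_point. ring. }
  rewrite K1 in I1.
  assert (I2 : RInt df 0 1 = RInt H 0 1 - RInt (fun y => y * h y) 0 1).
  { unfold df. apply (RInt_minus H (fun y => y * h y) 0 1).
    apply exRI; auto. apply exRI. intros; apply continuity_pt_mult; auto; apply continuity_pt_id. }
  rewrite E1, RInt_scal by (apply exRI; auto).
  change (scal (/ F) (RInt H 0 1)) with (/ F * RInt H 0 1).
  unfold Rdiv. rewrite Rmult_comm. f_equal. lra.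
Qed.

Definition rlim (phi : R -> R) x0 l := forall eps, 0 < eps -> exists d, 0 < d /\
  forall y, x0 < y < x0 + d -> Rabs (phi y - l) < eps.

Lemma rlim_filter phi x0 l : rlim phi x0 l <-> filterlim phi (at_right x0) (locally l).
Proof.
  split.
  - intros H. apply filterlim_locally. intros eps.
    destruct (H eps (cond_pos eps)) as [d [Hd H']].
    exists (mkposreal d Hd). intros y Hy Hy'. apply ball_R in Hy. apply ball_R. simpl in Hy.
    apply H'. apply Rabs_def2 in Hy. unfold minus, plus, opp in Hy; simpl in Hy. lra.
  - intros H eps He.
    destruct (proj1 (filterlim_locally phi l) H (mkposreal eps He)) as [d Hd].
    exists d; split; [apply cond_pos|]. intros y Hy.
    apply ball_R. apply Hd; [apply ball_R; apply Rabs_def1; lra| lra].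
Qed.

Lemma rlim_plus p q x0 lp lq : rlim p x0 lp -> rlim q x0 lq -> rlim (fun y => p y + q y) x0 (lp + lq).
Proof.
  intros Hp Hq. apply rlim_filter. apply rlim_filter in Hp, Hq.
  eapply filterlim_comp_2; [exact Hp| exact Hq|]. apply (filterlim_plus lp lq).
Qed.
Lemma rlim_mult p q x0 lp lq : rlim p x0 lp -> rlim q x0 lq -> rlim (fun y => p y * q y) x0 (lp * lq).
Proof.
  intros Hp Hq. apply rlim_filter. apply rlim_filter in Hp, Hq.
  eapply filterlim_comp_2; [exact Hp| exact Hq|]. apply (@filterlim_mult R_AbsRing lp lq).
Qed.
Lemma rlim_inv p x0 lp : rlim p x0 lp -> lp <> 0 -> rlim (fun y => / p y) x0 (/ lp).
Proof.
  intros Hp Hn. apply rlim_filter. apply rlim_filter in Hp.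
  eapply filterlim_comp; [exact Hp|]. apply (filterlim_Rbar_inv (Finite lp)). intro E; apply Hn; injection E; auto.
Qed.
Lemma rlim_const c x0 : rlim (fun _ => c) x0 c.
Proof. intros eps He. exists 1; split; [lra|]. intros. rewrite Rminus_diag, Rabs_R0; lra. Qed.
Lemma rlim_opp p x0 lp : rlim p x0 lp -> rlim (fun y => - p y) x0 (- lp).
Proof.
  intros H eps He. destruct (H eps He) as [d [Hd H']]. exists d; split; auto.
  intros y Hy. replace (- p y - - lp) with (- (p y - lp)) by ring. rewrite Rabs_Ropp. auto.
Qed.
Lemma rlim_ext p q x0 l : (exists d, 0 < d /\ forall y, x0 < y < x0 + d -> p y = q y) -> rlim p x0 l -> rlim q x0 l.
Proof.
  intros [d0 [Hd0 E]] H eps He. destruct (H eps He) as [d [Hd H']].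
  exists (Rmin d d0). split; [apply Rmin_glb_lt; auto|].
  intros y Hy. pose proof (Rmin_l d d0). pose proof (Rmin_r d d0).
  rewrite <- E by lra. apply H'. lra.
Qed.
Lemma rlim_cont p x0 : continuity_pt p x0 -> rlim p x0 (p x0).
Proof.
  intros H eps He. destruct (cpt_eps_inv p x0 H eps He) as [d [Hd H']].
  exists d; split; auto. intros y Hy. apply H'. apply Rabs_def1; lra.
Qed.
Lemma rlim_scale p x0 l a : 0 < a -> rlim p (a * x0) l -> rlim (fun y => p (a * y)) x0 l.
Proof.
  intros Ha H eps He. destruct (H eps He) as [d [Hd H']].
  exists (d / a). split; [apply Rdiv_lt_0_compat; auto|].
  intros y Hy. apply H'. split; [nra|].
  assert (a * y < a * (x0 + d / a)) by (apply Rmult_lt_compat_l; lra).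
  replace (a * (x0 + d / a)) with (a * x0 + d) in H0 by (field; lra). lra.
Qed.
Lemma rlim_le p x0 l c : rlim p x0 l -> (exists d, 0 < d /\ forall y, x0 < y < x0 + d -> p y <= c) -> l <= c.
Proof.
  intros H [d0 [Hd0 Hb]]. destruct (Rle_dec l c) as [|Hn]; auto. exfalso.
  destruct (H (l - c) ltac:(lra)) as [d [Hd H']].
  set (y := x0 + Rmin d d0 / 2).
  assert (x0 < y < x0 + d /\ y < x0 + d0) by (unfold y; pose proof (Rmin_l d d0); pose proof (Rmin_r d d0);
    pose proof (Rmin_glb_lt d d0 0 Hd Hd0); lra).
  specialize (H' y ltac:(lra)). specialize (Hb y ltac:(lra)). apply Rabs_def2 in H'. lra.
Qed.
Lemma rlim_ge p x0 l c : rlim p x0 l -> (exists d, 0 < d /\ forall y, x0 < y < x0 + d -> c <= p y) -> c <= l.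
Proof.
  intros H Hb. assert (- l <= - c); [|lra].
  apply (rlim_le (fun y => - p y) x0). apply rlim_opp; auto.
  destruct Hb as [d [Hd Hb]]. exists d; split; auto. intros y Hy. specialize (Hb y Hy). lra.
Qed.

Definition rd (g : R -> R) x d := rlim (fun h => (g (x + h) - g x) / h) 0 d.

Lemma rd_opp g x d : rd g x d -> rd (fun y => - g y) x (- d).
Proof.
  intros H. unfold rd. eapply rlim_ext; [|apply rlim_opp, H].
  exists 1; split; [lra|]. intros y Hy. field. lra.
Qed.

Lemma rd_ext g1 g2 x d : (exists d0, 0 < d0 /\ forall y, x <= y < x + d0 -> g1 y = g2 y) -> rd g1 x d -> rd g2 x d.
Proof.
  intros [d0 [Hd0 E]] H. unfold rd. eapply rlim_ext; [|exact H].
  exists d0; split; auto. intros y Hy. rewrite !E by lra. reflexivity.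
Qed.

Lemma rd_div u v x du dv : rd u x du -> rd v x dv -> rlim (fun h => v (x + h)) 0 (v x) -> v x <> 0 ->
  (exists d0, 0 < d0 /\ forall h, 0 < h < d0 -> v (x + h) <> 0) ->
  rd (fun y => u y / v y) x ((du * v x - u x * dv) / (v x * v x)).
Proof.
  intros Hu Hv Hc Hn [d0 [Hd0 Hnz]]. unfold rd.
  apply (rlim_ext (fun h => ((u (x + h) - u x) / h * v x - u x * ((v (x + h) - v x) / h)) * / (v (x + h) * v x))).
  { exists d0; split; auto. intros h Hh. specialize (Hnz h ltac:(lra)). field. repeat split; auto; lra. }
  unfold Rdiv at 3. apply rlim_mult.
  - apply rlim_plus; [apply rlim_mult; [exact Hu| apply rlim_const]|].
    apply rlim_opp. apply rlim_mult; [apply rlim_const| exact Hv].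
  - apply rlim_inv; [| apply Rmult_integral_contrapositive; auto].
    apply rlim_mult; [exact Hc| apply rlim_const].
Qed.

Definition rup (g : R -> R) x := forall eps, 0 < eps -> exists d, 0 < d /\ forall h, 0 < h < d -> g (x + h) <= g x + eps * h.

Lemma sup_exists (E : R -> Prop) z : is_lub E z -> forall d, 0 < d -> exists x, E x /\ z - d < x /\ x <= z.
Proof.
  intros [Hub Hl] d Hd. destruct (classic (exists x, E x /\ z - d < x)) as [[x [Ex Hx]]|Hno].
  - exists x. split; [exact Ex|]. split; [exact Hx|]. apply Hub; exact Ex.
  - exfalso. assert (z <= z - d); [|lra]. apply Hl. intros x Ex.
    destruct (Rle_dec x (z - d)) as [|Hn]; auto. exfalso; apply Hno; exists x; split; auto; lra.
Qed.

Lemma dini (g : R -> R) s t : s < t -> (forall x, s <= x <= t -> continuity_pt g x) ->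
  (forall x, s <= x < t -> rup g x) -> g t <= g s.
Proof.
  intros Hst Hc Hr. destruct (Rle_dec (g t) (g s)) as [|Hn]; auto. exfalso.
  set (eps := (g t - g s) / (2 * (t - s))).
  assert (He : 0 < eps) by (unfold eps; apply Rdiv_lt_0_compat; lra).
  set (E := fun x => s <= x <= t /\ g x <= g s + eps * (x - s)).
  assert (Hb : bound E) by (exists t; intros x [Hx _]; lra).
  assert (Hs : E s) by (split; [lra| rewrite Rminus_diag, Rmult_0_r; lra]).
  destruct (completeness E Hb (ex_intro _ s Hs)) as [z Hz].
  assert (Hzs : s <= z) by (apply Hz; auto).
  assert (Hzt : z <= t) by (apply Hz; intros x [Hx _]; lra).
  assert (Ez : g z <= g s + eps * (z - s)).
  { destruct (Rle_dec (g z) (g s + eps * (z - s))) as [|Hn2]; auto. exfalso.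
    set (k := fun y => g y - g s - eps * (y - s)).
    assert (Hk : continuity_pt k z).
    { unfold k. apply continuity_pt_minus; [apply continuity_pt_minus; [apply Hc; lra| apply cpt_const]|].
      apply continuity_pt_mult; [apply cpt_const|]. apply continuity_pt_minus; [apply continuity_pt_id| apply cpt_const]. }
    destruct (cpt_eps_inv k z Hk (k z) ltac:(unfold k; lra)) as [d [Hd Hdd]].
    destruct (sup_exists E z Hz d Hd) as [x [[Hx1 Hx2] [Hx3 Hx4]]].
    specialize (Hdd x ltac:(apply Rabs_def1; lra)). unfold k in Hdd. apply Rabs_def2 in Hdd. lra. }
  destruct (Req_dec z t) as [->|Hzt'].
  - unfold eps in Ez. assert (g t <= g s + (g t - g s) / 2) by (replace ((g t - g s) / 2) with ((g t - g s) / (2 * (t - s)) * (t - s)) by (field; lra); lra). lra.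
  - destruct (Hr z ltac:(lra) eps He) as [d [Hd Hdd]].
    set (h := Rmin (d / 2) ((t - z) / 2)).
    assert (Hh : 0 < h /\ h < d /\ h < t - z) by (unfold h, Rmin; destruct Rle_dec; lra).
    assert (E (z + h)).
    { split; [lra|]. specialize (Hdd h ltac:(lra)). nra. }
    assert (z + h <= z) by (apply Hz; auto). lra.
Qed.

Lemma last_cross (g : R -> R) p q b : p < q -> (forall x, p <= x <= q -> continuity_pt g x) ->
  g p < b -> b < g q -> exists z, p < z < q /\ g z = b /\ forall y, z < y <= q -> b < g y.
Proof.
  intros Hpq Hc Hp Hq.
  set (E := fun x => p <= x <= q /\ g x <= b).
  assert (Hb : bound E) by (exists q; intros x [Hx _]; lra).
  assert (Hs : E p) by (split; lra).
  destruct (completeness E Hb (ex_intro _ p Hs)) as [z Hz].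
  assert (Hzs : p <= z) by (apply Hz; auto).
  assert (Hzt : z <= q) by (apply Hz; intros x [Hx _]; lra).
  assert (Ez : g z <= b).
  { destruct (Rle_dec (g z) b) as [|Hn2]; auto. exfalso.
    destruct (cpt_eps_inv g z (Hc z ltac:(lra)) (g z - b) ltac:(lra)) as [d [Hd Hdd]].
    destruct (sup_exists E z Hz d Hd) as [x [[Hx1 Hx2] [Hx3 Hx4]]].
    specialize (Hdd x ltac:(apply Rabs_def1; lra)). apply Rabs_def2 in Hdd. lra. }
  assert (Ez2 : b <= g z).
  { destruct (Rle_dec b (g z)) as [|Hn2]; auto. exfalso.
    assert (z < q) by (destruct (Req_dec z q) as [->|]; lra).
    destruct (cpt_eps_inv g z (Hc z ltac:(lra)) (b - g z) ltac:(lra)) as [d [Hd Hdd]].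
    set (h := Rmin (d / 2) ((q - z) / 2)).
    assert (Hh : 0 < h /\ h < d /\ h < q - z) by (unfold h, Rmin; destruct Rle_dec; lra).
    specialize (Hdd (z + h) ltac:(apply Rabs_def1; lra)). apply Rabs_def2 in Hdd.
    assert (E (z + h)) by (split; lra).
    assert (z + h <= z) by (apply Hz; auto). lra. }
  exists z. split; [split|split].
  - destruct (Req_dec z p) as [->|]; lra.
  - destruct (Req_dec z q) as [->|]; lra.
  - lra.
  - intros y Hy. destruct (Rlt_dec b (g y)) as [|Hn]; auto. exfalso.
    assert (E y) by (split; lra). assert (y <= z) by (apply Hz; auto). lra.
Qed.

Lemma first_cross (g : R -> R) p q b : p < q -> (forall x, p <= x <= q -> continuity_pt g x) ->
  g p < b -> b < g q -> exists z, p < z < q /\ g z = b /\ forall y, p <= y < z -> g y < b.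
Proof.
  intros Hpq Hc Hp Hq.
  set (k := fun x => - g (- x)).
  assert (Hk : forall x, - q <= x <= - p -> continuity_pt k x).
  { intros x Hx. apply cpt_eps. intros eps He.
    destruct (cpt_eps_inv g (- x) (Hc (- x) ltac:(lra)) eps He) as [d [Hd H]].
    exists d; split; auto. intros y Hy. unfold k.
    replace (- g (- y) - - g (- x)) with (- (g (- y) - g (- x))) by ring. rewrite Rabs_Ropp.
    apply H. replace (- y - - x) with (- (y - x)) by ring. rewrite Rabs_Ropp; auto. }
  destruct (last_cross k (- q) (- p) (- b) ltac:(lra) Hk) as [z [Hz [Hkz Hy]]].
  { unfold k; rewrite Ropp_involutive; lra. }
  { unfold k; rewrite Ropp_involutive; lra. }
  exists (- z). split; [lra|]. split.
  - unfold k in Hkz. lra.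
  - intros y Hy'. specialize (Hy (- y) ltac:(lra)). unfold k in Hy. rewrite Ropp_involutive in Hy. lra.
Qed.

Lemma rup_of_rd g x d : rd g x d -> d <= 0 -> rup g x.
Proof.
  intros H Hd eps He. destruct (H eps He) as [d0 [Hd0 H']].
  exists d0; split; auto. intros h Hh. specialize (H' h ltac:(lra)).
  apply Rabs_def2 in H'.
  assert ((g (x + h) - g x) / h < eps) by lra.
  apply (Rmult_lt_compat_r h) in H0; [|lra]. unfold Rdiv in H0.
  rewrite Rmult_assoc, Rinv_l, Rmult_1_r in H0 by lra. lra.
Qed.

Lemma strict_mono g dg u w : u < w -> (forall x, u <= x <= w -> continuity_pt g x) ->
  (forall y, u <= y < w -> rd g y (dg y) /\ 0 < dg y) -> g u < g w.
Proof.
  intros Huw Hc Hd.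
  destruct (Hd u ltac:(lra)) as [Hu Hpos].
  destruct (Hu (dg u / 2) ltac:(lra)) as [d1 [Hd1 H1]].
  set (h := Rmin (d1 / 2) ((w - u) / 2)).
  assert (Hh : 0 < h /\ h < d1 /\ h < w - u) by (unfold h, Rmin; destruct Rle_dec; lra).
  specialize (H1 h ltac:(lra)). apply Rabs_def2 in H1.
  assert (G1 : g u < g (u + h)).
  { assert (0 < (g (u + h) - g u) / h) by lra.
    apply (Rmult_lt_compat_r h) in H; [|lra]. unfold Rdiv in H.
    rewrite Rmult_assoc, Rinv_l, Rmult_1_r in H by lra. lra. }
  assert (G2 : - g w <= - g (u + h)).
  { apply (dini (fun y => - g y)); [lra| intros; apply continuity_pt_opp; apply Hc; lra|].
    intros y Hy. destruct (Hd y ltac:(lra)) as [Hy1 Hy2].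
    apply (rup_of_rd _ _ (- dg y)); [apply rd_opp; auto| lra]. }
  lra.
Qed.

Definition rc_at (dg : R -> R) x := rlim dg x (dg x).

Lemma band (g dg : R -> R) p q b1 b2 : p < q -> (forall x, p <= x <= q -> continuity_pt g x) ->
  (forall x, p < x < q -> rd g x (dg x) /\ rc_at dg x) ->
  g p < b1 -> b1 < b2 -> b2 < g q ->
  exists y1 y2, p < y1 < y2 /\ y2 < q /\ b1 < g y1 /\ g y2 < b2 /\
    forall u w, y1 <= u < w -> w <= y2 -> g u < g w.
Proof.
  intros Hpq Hc Hd Hp H12 Hq.
  destruct (last_cross g p q b1 Hpq Hc Hp ltac:(lra)) as [s [Hs [Hgs Hs']]].
  destruct (first_cross g s q b2 ltac:(lra) ltac:(intros; apply Hc; lra) ltac:(lra) Hq) as [t [Ht [Hgt Ht']]].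
  assert (Hband : forall y, s < y < t -> b1 < g y < b2).
  { intros y Hy. split; [apply Hs'; lra| apply Ht'; lra]. }
  set (s2 := (s + t) / 2).
  assert (Hs2 : g s2 < g t) by (pose proof (Hband s2 ltac:(unfold s2; lra)); lra).
  assert (Hex : exists x, s2 <= x < t /\ 0 < dg x).
  { destruct (classic (exists x, s2 <= x < t /\ 0 < dg x)) as [|Hno]; auto. exfalso.
    assert (g t <= g s2); [|lra].
    apply dini; [unfold s2; lra| intros; apply Hc; unfold s2 in *; lra|].
    intros x Hx. destruct (Hd x ltac:(unfold s2 in *; lra)) as [Hdx _].
    apply (rup_of_rd _ _ (dg x)); auto.
    destruct (Rle_dec (dg x) 0) as [|Hn]; auto. exfalso; apply Hno; exists x; split; auto; lra. }
  destruct Hex as [x [Hx Hdx]].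
  destruct (Hd x ltac:(unfold s2 in *; lra)) as [_ Hrc].
  destruct (Hrc (dg x / 2) ltac:(lra)) as [d0 [Hd0 Hdd]].
  set (d := Rmin d0 (t - x)).
  assert (Hdd' : 0 < d /\ d <= d0 /\ d <= t - x) by (unfold d, Rmin; destruct Rle_dec; lra).
  exists (x + d / 3), (x + 2 * d / 3).
  split; [split; [unfold s2 in *; lra| lra]|]. split; [lra|]. split; [apply Hband; unfold s2 in *; lra|].
  split; [apply Hband; unfold s2 in *; lra|].
  intros u w Hu Hw. apply (strict_mono g dg); [lra| intros; apply Hc; unfold s2 in *; lra|].
  intros y Hy. split; [apply Hd; unfold s2 in *; lra|].
  specialize (Hdd y ltac:(lra)). apply Rabs_def2 in Hdd. lra.
Qed.

Definition clean (g : R -> R) b p q x := p < x < q /\ g x = b /\ exists d, 0 < d /\ d <= x - p /\ d <= q - x /\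
  forall s, 0 < s <= d -> (g (x - s) - b) * (g (x + s) - b) < 0.

Lemma nested (g dg : R -> R) p q b1 b2 : p < q -> (forall x, p <= x <= q -> continuity_pt g x) ->
  (forall x, p < x < q -> rd g x (dg x) /\ rc_at dg x) -> b1 < b2 ->
  (g p < b1 /\ b2 < g q) \/ (b2 < g p /\ g q < b1) ->
  exists c1 c2, b1 <= c1 < c2 /\ c2 <= b2 /\ forall b, c1 < b < c2 -> exists x, clean g b p q x.
Proof.
  intros Hpq Hc Hd H12 [[Hp Hq]|[Hp Hq]].
  - destruct (band g dg p q b1 b2 Hpq Hc Hd Hp H12 Hq) as [y1 [y2 [Hy [Hy2 [G1 [G2 Hm]]]]]].
    assert (Hm12 : g y1 < g y2) by (apply Hm; lra).
    exists (g y1), (g y2). split; [lra|]. split; [lra|].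
    intros b Hb.
    destruct (last_cross g y1 y2 b ltac:(lra) ltac:(intros; apply Hc; lra) ltac:(lra) ltac:(lra)) as [x [Hx [Hgx _]]].
    exists x. split; [lra|]. split; auto.
    exists (Rmin (x - y1) (y2 - x)). split; [apply Rmin_glb_lt; lra|].
    split; [pose proof (Rmin_l (x - y1) (y2 - x)); lra|]. split; [pose proof (Rmin_r (x - y1) (y2 - x)); lra|].
    intros s Hs. pose proof (Rmin_l (x - y1) (y2 - x)). pose proof (Rmin_r (x - y1) (y2 - x)).
    assert (g (x - s) < g x) by (apply Hm; lra).
    assert (g x < g (x + s)) by (apply Hm; lra).
    assert (g (x - s) - b < 0) by lra. assert (0 < g (x + s) - b) by lra. nra.
  - set (k := fun y => - g y).
    destruct (band k (fun y => - dg y) p q (- b2) (- b1) Hpq) as [y1 [y2 [Hy [Hy2 [G1 [G2 Hm]]]]]];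
      unfold k in *; try lra.
    { intros; apply continuity_pt_opp; auto. }
    { intros x Hx. destruct (Hd x Hx) as [A B]. split; [apply rd_opp; auto|].
      unfold rc_at. apply rlim_opp. auto. }
    assert (Hm12 : - g y1 < - g y2) by (apply Hm; lra).
    exists (g y2), (g y1). split; [lra|]. split; [lra|].
    intros b Hb.
    destruct (last_cross k y1 y2 (- b) ltac:(lra)) as [x [Hx [Hgx _]]]; unfold k in *; try lra.
    { intros; apply continuity_pt_opp; apply Hc; lra. }
    exists x. split; [lra|]. split; [lra|].
    exists (Rmin (x - y1) (y2 - x)). split; [apply Rmin_glb_lt; lra|].
    split; [pose proof (Rmin_l (x - y1) (y2 - x)); lra|]. split; [pose proof (Rmin_r (x - y1) (y2 - x)); lra|].
    intros s Hs. pose proof (Rmin_l (x - y1) (y2 - x)). pose proof (Rmin_r (x - y1) (y2 - x)).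
    assert (- g (x - s) < - g x) by (apply Hm; lra).
    assert (- g x < - g (x + s)) by (apply Hm; lra).
    assert (g (x - s) - b > 0) by lra. assert (g (x + s) - b < 0) by lra. nra.
Qed.

Lemma sign_band u v b e : (u - b) * (v - b) < 0 -> e < Rabs (u - b) -> e < Rabs (v - b) ->
  (u < b - e /\ b + e < v) \/ (b + e < u /\ v < b - e).
Proof.
  intros H Hu Hv. unfold Rabs in *. destruct (Rcase_abs (u - b)); destruct (Rcase_abs (v - b)).
  - nra.
  - left; lra.
  - right; lra.
  - nra.
Qed.

Lemma triple (g dg : R -> R) lo hi b p1 q1 p2 q2 p3 q3 :
  (forall x, lo <= x <= hi -> continuity_pt g x) ->
  (forall x, lo < x < hi -> rd g x (dg x) /\ rc_at dg x) -> 0 < b ->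
  lo <= p1 -> p1 < q1 -> q1 <= p2 -> p2 < q2 -> q2 <= p3 -> p3 < q3 -> q3 <= hi ->
  (g p1 - b) * (g q1 - b) < 0 -> (g p2 - b) * (g q2 - b) < 0 -> (g p3 - b) * (g q3 - b) < 0 ->
  exists b', 0 < b' /\ exists x1 x2 x3, clean g b' p1 q1 x1 /\ clean g b' p2 q2 x2 /\ clean g b' p3 q3 x3.
Proof.
  intros Hc Hd Hb H0 H1 H2 H3 H4 H5 H6 C1 C2 C3.
  assert (Nz : forall u v, (u - b) * (v - b) < 0 -> 0 < Rabs (u - b) /\ 0 < Rabs (v - b)).
  { intros u v Huv. split; apply Rabs_pos_lt; intro E; rewrite E in Huv; lra. }
  destruct (Nz _ _ C1) as [A1 B1]. destruct (Nz _ _ C2) as [A2 B2]. destruct (Nz _ _ C3) as [A3 B3].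
  set (e := Rmin b (Rmin (Rmin (Rabs (g p1 - b)) (Rabs (g q1 - b)))
             (Rmin (Rmin (Rabs (g p2 - b)) (Rabs (g q2 - b))) (Rmin (Rabs (g p3 - b)) (Rabs (g q3 - b))))) / 2).
  assert (He : 0 < e /\ e < b /\ e < Rabs (g p1 - b) /\ e < Rabs (g q1 - b) /\ e < Rabs (g p2 - b) /\
     e < Rabs (g q2 - b) /\ e < Rabs (g p3 - b) /\ e < Rabs (g q3 - b)).
  { unfold e. unfold Rmin; repeat destruct Rle_dec; lra. }
  destruct He as (He0 & He1 & E1 & E2 & E3 & E4 & E5 & E6).
  destruct (nested g dg p1 q1 (b - e) (b + e) H1 ltac:(intros; apply Hc; lra) ltac:(intros; apply Hd; lra)
    ltac:(lra) (sign_band _ _ b e C1 E1 E2)) as [c1 [c2 [Hc1 [Hc2 K1]]]].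
  destruct (nested g dg p2 q2 c1 c2 H3 ltac:(intros; apply Hc; lra) ltac:(intros; apply Hd; lra)
    ltac:(lra)) as [c3 [c4 [Hc3 [Hc4 K2]]]].
  { destruct (sign_band _ _ b e C2 E3 E4); [left|right]; lra. }
  destruct (nested g dg p3 q3 c3 c4 H5 ltac:(intros; apply Hc; lra) ltac:(intros; apply Hd; lra)
    ltac:(lra)) as [c5 [c6 [Hc5 [Hc6 K3]]]].
  { destruct (sign_band _ _ b e C3 E5 E6); [left|right]; lra. }
  set (b' := (c5 + c6) / 2).
  exists b'. split; [unfold b'; lra|].
  destruct (K1 b' ltac:(unfold b'; lra)) as [x1 X1].
  destruct (K2 b' ltac:(unfold b'; lra)) as [x2 X2].
  destruct (K3 b' ltac:(unfold b'; lra)) as [x3 X3].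
  exists x1, x2, x3. auto.
Qed.

Lemma div_le_iff A B p q : 0 < p -> 0 < q -> (A * q <= B * p <-> A / p <= B / q).
Proof.
  intros Hp Hq. split; intros H.
  - apply (Rmult_le_reg_r (p * q)); [nra|]. replace (A / p * (p * q)) with (A * q) by (field; lra).
    replace (B / q * (p * q)) with (B * p) by (field; lra). exact H.
  - apply (Rmult_le_compat_r (p * q)) in H; [|nra]. replace (A / p * (p * q)) with (A * q) in H by (field; lra).
    replace (B / q * (p * q)) with (B * p) in H by (field; lra). exact H.
Qed.

Lemma div_le A B p q : 0 < p -> 0 < q -> A * q <= B * p -> A / p <= B / q.
Proof. intros Hp Hq H. apply (div_le_iff A B p q Hp Hq). exact H. Qed.

Section Conv.
Variable f : R -> R.
Hypothesis Hf : inD f.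

Definition sl u v := (f v - f u) / (v - u).

Lemma conv3 u v w : 0 <= u -> u < v -> v < w -> w <= 1 ->
  f v * (w - u) <= (w - v) * f u + (v - u) * f w.
Proof.
  intros. set (t := (w - v) / (w - u)).
  assert (Ht : 0 <= t <= 1).
  { unfold t; split; [apply Rdiv_le_0_compat; lra|]. apply (Rmult_le_reg_r (w - u)); [lra|].
    unfold Rdiv; rewrite Rmult_assoc, Rinv_l by lra. lra. }
  assert (Hv : v = t * u + (1 - t) * w) by (unfold t; field; lra).
  pose proof (inD_conv f Hf u w t ltac:(lra) ltac:(lra) Ht) as C. rewrite <- Hv in C.
  apply (Rmult_le_compat_r (w - u)) in C; [|lra].
  replace ((t * f u + (1 - t) * f w) * (w - u)) with ((w - v) * f u + (v - u) * f w) in C by (unfold t; field; lra).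
  exact C.
Qed.

Lemma slope_mono u v w : 0 <= u -> u < v -> v < w -> w <= 1 ->
  sl u v <= sl u w /\ sl u w <= sl v w /\ sl u v <= sl v w.
Proof.
  intros. pose proof (conv3 u v w H H0 H1 H2) as C. unfold sl.
  assert (A : (f v - f u) / (v - u) <= (f w - f u) / (w - u)) by (apply div_le; nra).
  assert (B : (f w - f u) / (w - u) <= (f w - f v) / (w - v)) by (apply div_le; nra).
  lra.
Qed.

Lemma sl_eq x h : h <> 0 -> (f (x + h) - f x) / h = sl x (x + h).
Proof. intros. unfold sl. replace (x + h - x) with h by ring. reflexivity. Qed.

Lemma fd_exists x : 0 < x < 1 -> exists d, rd f x d.
Proof.
  intros Hx.
  set (E := fun s => exists h, 0 < h <= 1 - x /\ s = - sl x (x + h)).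
  assert (Hb : bound E).
  { exists (- sl 0 x). intros s [h [Hh ->]].
    destruct (slope_mono 0 x (x + h)) as [_ [_ K]]; lra. }
  assert (Hne : E (- sl x (x + (1 - x)))) by (exists (1 - x); split; [lra| auto]).
  destruct (completeness E Hb (ex_intro _ _ Hne)) as [L HL].
  exists (- L). intros eps He.
  destruct (sup_exists E L HL eps He) as [s [[h1 [Hh1 ->]] [Hs1 Hs2]]].
  exists h1. split; [lra|]. intros h Hh. rewrite sl_eq by lra.
  assert (Ub : - sl x (x + h) <= L) by (apply HL; exists h; split; [lra| auto]).
  assert (sl x (x + h) <= sl x (x + h1)).
  { destruct (Req_dec h h1) as [->|]; [lra|]. destruct (slope_mono x (x + h) (x + h1)) as [K _]; lra. }
  apply Rabs_def1; lra.
Qed.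

Definition fd x := epsilon (inhabits 0) (fun d => rd f x d).

Lemma fd_spec x : 0 < x < 1 -> rd f x (fd x).
Proof. intros Hx. unfold fd. apply epsilon_spec. apply fd_exists; auto. Qed.

Lemma fd_le_sl x v : 0 < x < 1 -> x < v <= 1 -> fd x <= sl x v.
Proof.
  intros Hx Hv. apply (rlim_le _ 0 _ _ (fd_spec x Hx)).
  exists (v - x). split; [lra|]. intros h Hh. rewrite sl_eq by lra.
  destruct (Req_dec (x + h) v) as [->|]; [lra|].
  destruct (slope_mono x (x + h) v) as [K _]; lra.
Qed.

Lemma sl_le_fd u x : 0 <= u < x -> x < 1 -> sl u x <= fd x.
Proof.
  intros Hu Hx. apply (rlim_ge _ 0 _ _ (fd_spec x ltac:(lra))).
  exists (1 - x). split; [lra|]. intros h Hh. rewrite sl_eq by lra.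
  destruct (slope_mono u x (x + h)) as [_ [_ K]]; lra.
Qed.

Lemma fd_rc x : 0 < x < 1 -> rc_at fd x.
Proof.
  intros Hx eps He.
  destruct (fd_spec x Hx (eps / 2) ltac:(lra)) as [d1 [Hd1 H1]].
  set (h0 := Rmin (d1 / 2) ((1 - x) / 2)).
  assert (Hh0 : 0 < h0 /\ h0 < d1 /\ h0 < 1 - x) by (unfold h0, Rmin; destruct Rle_dec; lra).
  specialize (H1 h0 ltac:(lra)). rewrite sl_eq in H1 by lra. apply Rabs_def2 in H1.
  set (phi := fun y => (f (x + h0) - f y) / (x + h0 - y)).
  assert (Hphi : continuity_pt phi x).
  { unfold phi. apply continuity_pt_div.
    - apply continuity_pt_minus; [apply cpt_const| apply inD_cint; auto].
    - apply continuity_pt_minus; [apply cpt_const| apply continuity_pt_id].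
    - lra. }
  destruct (cpt_eps_inv phi x Hphi (eps / 2) ltac:(lra)) as [d2 [Hd2 H2]].
  exists (Rmin d2 h0). split; [apply Rmin_glb_lt; lra|].
  intros y Hy. pose proof (Rmin_l d2 h0). pose proof (Rmin_r d2 h0).
  assert (A : fd x <= fd y).
  { apply Rle_trans with (sl x y); [apply fd_le_sl; lra| apply sl_le_fd; lra]. }
  assert (B : fd y <= phi y) by (unfold phi; apply (fd_le_sl y (x + h0)); lra).
  specialize (H2 y ltac:(apply Rabs_def1; lra)). apply Rabs_def2 in H2.
  assert (phi x = sl x (x + h0)) by (unfold phi, sl; field; lra).
  apply Rabs_def1; lra.
Qed.

Variable a : R.
Hypothesis Ha : 0 < a.

Definition rr y := fcl f (a * y) / fcl f y.
Definition dr y := (a * fd (a * y) * f y - f (a * y) * fd y) / (f y * f y).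

Lemma fcl_pos y : y < 1 -> 0 < fcl f y.
Proof. intros. unfold fcl. apply inD_pos; auto. unfold cl, Rmax, Rmin; repeat destruct Rle_dec; lra. Qed.

Lemma rr_cont y : y < 1 -> continuity_pt rr y.
Proof.
  intros Hy. unfold rr. apply continuity_pt_div.
  - apply (continuity_pt_comp (fun t => a * t) (fcl f)). apply continuity_pt_mult; [apply cpt_const| apply continuity_pt_id].
    apply fcl_cont; auto.
  - apply fcl_cont; auto.
  - pose proof (fcl_pos y Hy). lra.
Qed.

Lemma rr_0 : rr 0 = 1.
Proof. unfold rr. rewrite Rmult_0_r, fcl_eq, inD_0 by (auto; lra). field. Qed.

Lemma rr_eq y : 0 <= y < 1 -> a * y <= 1 -> rr y = f (a * y) / f y.
Proof. intros. unfold rr. rewrite !fcl_eq; auto; try lra. split; [nra|lra]. Qed.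

Lemma shift_rlim x : 0 < x < 1 -> rlim (fun h => f (x + h)) 0 (f x).
Proof.
  intros Hx. assert (C : continuity_pt (fun h => f (x + h)) 0).
  { apply cpt_eps. intros eps He. destruct (cpt_eps_inv f x (inD_cint f Hf x Hx) eps He) as [d [Hd H]].
    exists d; split; auto. intros y Hy. rewrite Rplus_0_r. apply H. replace (x + y - x) with (y - 0) by ring. auto. }
  pose proof (rlim_cont _ 0 C) as K. simpl in K. rewrite Rplus_0_r in K. exact K.
Qed.

Lemma rr_rd x : 0 < x < 1 -> a * x < 1 -> rd rr x (dr x).
Proof.
  intros Hx Hax.
  assert (Hax0 : 0 < a * x < 1) by nra.
  assert (Du : rd (fun y => f (a * y)) x (a * fd (a * x))).
  { pose proof (fd_spec (a * x) Hax0) as K. unfold rd in *.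
    assert (K2 : rlim (fun h => (f (a * x + a * h) - f (a * x)) / (a * h)) 0 (fd (a * x))).
    { apply (rlim_scale (fun h => (f (a * x + h) - f (a * x)) / h) 0 (fd (a * x)) a Ha). rewrite Rmult_0_r. exact K. }
    apply (rlim_ext (fun h => a * ((f (a * x + a * h) - f (a * x)) / (a * h)))).
    { exists 1; split; [lra|]. intros y Hy. rewrite Rmult_plus_distr_l. field. lra. }
    apply rlim_mult; [apply rlim_const| exact K2]. }
  pose proof (rd_div (fun y => f (a * y)) f x _ _ Du (fd_spec x Hx) (shift_rlim x Hx)
    ltac:(pose proof (inD_pos f Hf x ltac:(lra)); lra)) as K.
  assert (K' := K ltac:(exists (1 - x); split; [lra| intros h Hh; pose proof (inD_pos f Hf (x + h) ltac:(lra)); lra])).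
  unfold dr. eapply rd_ext; [|exact K'].
  exists (Rmin (1 - x) ((1 - a * x) / a)). split.
  { apply Rmin_glb_lt; [lra| apply Rdiv_lt_0_compat; lra]. }
  intros y Hy. pose proof (Rmin_l (1 - x) ((1 - a * x) / a)). pose proof (Rmin_r (1 - x) ((1 - a * x) / a)).
  assert (a * y < 1).
  { assert (a * (y - x) < a * ((1 - a * x) / a)) by (apply Rmult_lt_compat_l; lra).
    replace (a * ((1 - a * x) / a)) with (1 - a * x) in H1 by (field; lra). lra. }
  rewrite rr_eq; auto; lra.
Qed.

Lemma dr_rc x : 0 < x < 1 -> a * x < 1 -> rc_at dr x.
Proof.
  intros Hx Hax. assert (Hax0 : 0 < a * x < 1) by nra.
  unfold rc_at, dr, Rdiv.
  assert (L1 : rlim (fun y => fd (a * y)) x (fd (a * x))) by (apply rlim_scale; auto; apply fd_rc; auto).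
  assert (L2 : rlim f x (f x)) by (apply rlim_cont; apply inD_cint; auto).
  assert (L3 : rlim (fun y => f (a * y)) x (f (a * x))) by (apply rlim_scale; auto; apply rlim_cont; apply inD_cint; auto).
  assert (L4 : rlim fd x (fd x)) by (apply fd_rc; auto).
  apply rlim_mult.
  - apply rlim_plus; [apply rlim_mult; [apply rlim_mult; [apply rlim_const| exact L1]| exact L2]|].
    apply rlim_opp. apply rlim_mult; auto.
  - apply rlim_inv; [apply rlim_mult; auto|].
    pose proof (inD_pos f Hf x ltac:(lra)). nra.
Qed.

End Conv.

Lemma parity w0 w1 w2 w3 w4 w5 : w0 * w5 < 0 -> w1 * w2 < 0 -> w3 * w4 < 0 ->
  w0 * w1 < 0 \/ w2 * w3 < 0 \/ w4 * w5 < 0.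
Proof.
  intros A B C.
  destruct (Rlt_dec w0 0); destruct (Rlt_dec w1 0); destruct (Rlt_dec w2 0);
  destruct (Rlt_dec w3 0); destruct (Rlt_dec w4 0); destruct (Rlt_dec w5 0);
  try (left; nra); try (right; left; nra); try (right; right; nra); exfalso; nra.
Qed.

Lemma sw_ext (D1 D2 : R -> R) c0 d0 c d : (forall x, c0 <= x <= d0 -> D1 x = D2 x) ->
  sign_switch D1 c0 d0 c d -> sign_switch D2 c0 d0 c d.
Proof.
  intros E (H1 & H2 & H3 & dl & Hd & Hdm & H4).
  pose proof (Rmin_l (c - c0) (d0 - d)). pose proof (Rmin_r (c - c0) (d0 - d)).
  split; [auto|]. split; [auto|]. split.
  - intros y Hy. rewrite <- E by lra. auto.
  - exists dl. split; auto. split; auto. intros x Hx. rewrite <- !E by lra. auto.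
Qed.

Lemma hs_ext (D1 D2 : R -> R) c0 d0 n : (forall x, c0 <= x <= d0 -> D1 x = D2 x) ->
  has_switches D1 c0 d0 n -> has_switches D2 c0 d0 n.
Proof.
  intros E [l [Hnd [Hl Hf]]]. exists l. split; auto. split; auto.
  eapply Forall_impl; [|exact Hf]. intros [c d]; simpl. apply sw_ext; auto.
Qed.

Lemma sw_disj (D : R -> R) c0 d0 c1 d1 c2 d2 : sign_switch D c0 d0 c1 d1 -> sign_switch D c0 d0 c2 d2 ->
  (c1, d1) <> (c2, d2) -> d1 < c2 \/ d2 < c1.
Proof.
  intros (A1 & A2 & A3 & e1 & He1 & Hm1 & A4) (B1 & B2 & B3 & e2 & He2 & Hm2 & B4) Hne.
  destruct (Rlt_dec d1 c2) as [|N1]; [left; auto|]. destruct (Rlt_dec d2 c1) as [|N2]; [right; auto|].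
  exfalso.
  destruct (Rtotal_order c1 c2) as [Hc|[Hc|Hc]].
  - set (x := Rmin e2 (c2 - c1)). assert (0 < x /\ x <= e2 /\ x <= c2 - c1) by (unfold x, Rmin; destruct Rle_dec; lra).
    specialize (B4 x ltac:(lra)). rewrite (A3 (c2 - x)) in B4 by lra. lra.
  - subst c2. destruct (Rtotal_order d1 d2) as [Hd|[Hd|Hd]].
    + set (x := Rmin e1 (d2 - d1)). assert (0 < x /\ x <= e1 /\ x <= d2 - d1) by (unfold x, Rmin; destruct Rle_dec; lra).
      specialize (A4 x ltac:(lra)). rewrite (B3 (d1 + x)) in A4 by lra. lra.
    + subst; apply Hne; auto.
    + set (x := Rmin e2 (d1 - d2)). assert (0 < x /\ x <= e2 /\ x <= d1 - d2) by (unfold x, Rmin; destruct Rle_dec; lra).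
      specialize (B4 x ltac:(lra)). rewrite (A3 (d2 + x)) in B4 by lra. lra.
  - set (x := Rmin e1 (c1 - c2)). assert (0 < x /\ x <= e1 /\ x <= c1 - c2) by (unfold x, Rmin; destruct Rle_dec; lra).
    specialize (A4 x ltac:(lra)). rewrite (B3 (c1 - x)) in A4 by lra. lra.
Qed.

Lemma sw_nosign (D : R -> R) c0 d0 c d : ((forall x, c0 <= x <= d0 -> 0 <= D x) \/ (forall x, c0 <= x <= d0 -> D x <= 0)) ->
  sign_switch D c0 d0 c d -> False.
Proof.
  intros Hs (H1 & H2 & H3 & e & He & Hm & H4).
  pose proof (Rmin_l (c - c0) (d0 - d)). pose proof (Rmin_r (c - c0) (d0 - d)).
  specialize (H4 e ltac:(lra)).
  destruct Hs as [Hs|Hs].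
  - pose proof (Hs (c - e) ltac:(lra)). pose proof (Hs (d + e) ltac:(lra)). nra.
  - pose proof (Hs (c - e) ltac:(lra)). pose proof (Hs (d + e) ltac:(lra)). nra.
Qed.

Definition Df (f : R -> R) a b := fun x => fscale f a x - b * f x.

Section Core.
Variable f : R -> R.
Hypothesis Hf : inD f.
Variable a : R.
Hypothesis Ha : 0 < a.
Let m := Rmin 1 (/ a).

Lemma m_facts : 0 < m <= 1 /\ a * m <= 1.
Proof.
  unfold m, Rmin. destruct Rle_dec.
  - split; [lra|]. apply (Rmult_le_reg_r (/ a)); [apply Rinv_0_lt_compat; auto|]. rewrite Rmult_1_l, Rmult_comm, <- Rmult_assoc, Rinv_l by lra. lra.
  - pose proof (Rinv_0_lt_compat a Ha). split; [lra|]. rewrite Rinv_r by lra. lra.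
Qed.

Lemma ax_le x : 0 <= x <= m -> 0 <= a * x <= 1.
Proof. intros. destruct m_facts as [_ K]. split; [nra|]. assert (a * x <= a * m) by (apply Rmult_le_compat_l; lra). lra. Qed.

Lemma D_eq b x : 0 <= x <= m -> x < 1 -> Df f a b x = f x * (rr f a x - b).
Proof.
  intros Hx Hx1. unfold Df, fscale. rewrite rr_eq by (auto; try lra; apply ax_le; auto).
  pose proof (inD_pos f Hf x ltac:(lra)). field. lra.
Qed.

Lemma prod_pos_neg P X : 0 < P -> P * X < 0 -> X < 0.
Proof. intros. nra. Qed.

Lemma clean_switch b' p q x e : 0 <= p -> q <= e -> e <= m -> e < 1 -> clean (rr f a) b' p q x ->
  sign_switch (Df f a b') 0 m x x.
Proof.
  intros Hp Hq Hem He1 (Hx & Hrx & d & Hd & Hd1 & Hd2 & Hs).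
  split; [lra|]. split; [lra|]. split.
  - intros y Hy. assert (y = x) by lra. subst y. rewrite D_eq by lra. rewrite Hrx. ring.
  - exists d. split; auto. split.
    { apply Rmin_glb; lra. }
    intros s Hs'. rewrite !D_eq by lra.
    specialize (Hs s Hs'). pose proof (inD_pos f Hf (x - s) ltac:(lra)). pose proof (inD_pos f Hf (x + s) ltac:(lra)).
    replace (f (x - s) * (rr f a (x - s) - b') * (f (x + s) * (rr f a (x + s) - b')))
      with ((f (x - s) * f (x + s)) * ((rr f a (x - s) - b') * (rr f a (x + s) - b'))) by ring.
    apply Rmult_pos_neg; [nra| lra]. 
Qed.

Lemma core3 b c1 d1 c2 d2 : 0 < b -> sign_switch (Df f a b) 0 m c1 d1 -> sign_switch (Df f a b) 0 m c2 d2 ->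
  d1 < c2 -> exists b', 0 < b' /\ has_switches (Df f a b') 0 m 3.
Proof.
  intros Hb S1 S2 Hord.
  destruct m_facts as [Hm Ham].
  assert (Hcase : (a < 1 /\ 1 < b) \/ (1 < a /\ b < 1)).
  { destruct (Rtotal_order a 1) as [Ha1|[Ha1|Ha1]].
    - destruct (Rlt_dec 1 b) as [|Hb1]; [left; auto|]. exfalso.
      apply (sw_nosign (Df f a b) 0 m c1 d1); [left; intros x Hx| exact S1].
      unfold Df, fscale. pose proof (ax_le x Hx). pose proof (inD_range f Hf x ltac:(lra)).
      assert (f x <= f (a * x)) by (apply (inD_decle f Hf); try lra; nra). nra.
    - exfalso. subst a.
      apply (sw_nosign (Df f 1 b) 0 m c1 d1); [| exact S1].
      unfold Df, fscale. setoid_rewrite Rmult_1_l.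
      destruct (Rle_dec b 1); [left|right]; intros x Hx; pose proof (inD_range f Hf x ltac:(lra)); nra.
    - destruct (Rlt_dec b 1) as [|Hb1]; [right; auto|]. exfalso.
      apply (sw_nosign (Df f a b) 0 m c2 d2); [right; intros x Hx| exact S2].
      unfold Df, fscale. pose proof (ax_le x Hx). pose proof (inD_range f Hf x ltac:(lra)).
      assert (f (a * x) <= f x) by (apply (inD_decle f Hf); try lra; nra). nra. }
  destruct S1 as (A1 & A2 & A3 & e1 & He1 & Hm1 & A4).
  destruct S2 as (B1 & B2 & B3 & e2 & He2 & Hm2 & B4).
  pose proof (Rmin_l (c1 - 0) (m - d1)). pose proof (Rmin_r (c1 - 0) (m - d1)).
  pose proof (Rmin_l (c2 - 0) (m - d2)). pose proof (Rmin_r (c2 - 0) (m - d2)).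
  set (t := Rmin (Rmin e1 e2) (c2 - d1) / 3).
  assert (Ht : 0 < t /\ t < e1 /\ t < e2 /\ 2 * t < c2 - d1) by (unfold t, Rmin; repeat destruct Rle_dec; lra).
  set (u1 := c1 - t). set (v1 := d1 + t). set (u2 := c2 - t). set (v2 := d2 + t).
  assert (Pts : 0 < u1 /\ u1 < v1 /\ v1 < u2 /\ u2 < v2 /\ v2 < m) by (unfold u1, v1, u2, v2; lra).
  assert (W1 : (rr f a u1 - b) * (rr f a v1 - b) < 0).
  { specialize (A4 t ltac:(lra)). fold u1 v1 in A4. rewrite !D_eq in A4 by lra.
    pose proof (inD_pos f Hf u1 ltac:(lra)). pose proof (inD_pos f Hf v1 ltac:(lra)).
    apply (prod_pos_neg (f u1 * f v1)); [nra|]. 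
    replace (f u1 * f v1 * ((rr f a u1 - b) * (rr f a v1 - b))) with (f u1 * (rr f a u1 - b) * (f v1 * (rr f a v1 - b))) by ring. exact A4. }
  assert (W2 : (rr f a u2 - b) * (rr f a v2 - b) < 0).
  { specialize (B4 t ltac:(lra)). fold u2 v2 in B4. rewrite !D_eq in B4 by lra.
    pose proof (inD_pos f Hf u2 ltac:(lra)). pose proof (inD_pos f Hf v2 ltac:(lra)).
    apply (prod_pos_neg (f u2 * f v2)); [nra|].
    replace (f u2 * f v2 * ((rr f a u2 - b) * (rr f a v2 - b))) with (f u2 * (rr f a u2 - b) * (f v2 * (rr f a v2 - b))) by ring. exact B4. }
  assert (Hend : exists e, v2 < e /\ e <= m /\ e < 1 /\ (rr f a 0 - b) * (rr f a e - b) < 0).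
  { rewrite rr_0 by auto. destruct Hcase as [[Ha1 Hb1]|[Ha1 Hb1]].
    - assert (Em : m = 1) by (unfold m, Rmin; destruct Rle_dec; [auto|]; exfalso; apply n;
        apply (Rmult_le_reg_l a); [lra|]; rewrite Rinv_r by lra; lra).
      pose proof (inD_pos f Hf a ltac:(lra)) as Hfa.
      destruct (inD_ceps f Hf 1 ltac:(lra) (f a / b) ltac:(apply Rdiv_lt_0_compat; lra)) as [d [Hd Hdd]].
      set (e := (Rmax v2 (1 - d / 2) + 1) / 2).
      assert (He : v2 < e /\ e < 1 /\ 1 - d < e) by (unfold e, Rmax; destruct Rle_dec; lra).
      exists e. split; [lra|]. split; [lra|]. split; [lra|].
      rewrite rr_eq by (auto; lra || nra).
      specialize (Hdd e ltac:(lra) ltac:(apply Rabs_def1; lra)). rewrite (inD_1 f Hf) in Hdd.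
      apply Rabs_def2 in Hdd.
      assert (f a <= f (a * e)) by (apply (inD_decle f Hf); try lra; nra).
      pose proof (inD_pos f Hf e ltac:(lra)).
      assert (Hfe : f e < f a / b) by lra.
      assert (Hbf : b * f e < b * (f a / b)) by (apply Rmult_lt_compat_l; lra).
      replace (b * (f a / b)) with (f a) in Hbf by (field; lra).
      assert (Hr : b < f (a * e) / f e).
      { apply (Rmult_lt_reg_r (f e)); [lra|]. unfold Rdiv. rewrite Rmult_assoc, Rinv_l, Rmult_1_r by lra. lra. }
      apply Rmult_neg_pos; lra.
    - assert (Em : m = / a) by (unfold m, Rmin; destruct Rle_dec; [|auto]; exfalso;
        assert (a * 1 <= a * / a) by (apply Rmult_le_compat_l; lra); rewrite Rinv_r in H3 by lra; lra).
      exists m. split; [lra|]. split; [lra|]. split.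
      { rewrite Em. apply (Rmult_lt_reg_l a); [lra|]. rewrite Rinv_r by lra. lra. }
      assert (Hm1' : m < 1) by (rewrite Em; apply (Rmult_lt_reg_l a); [lra|]; rewrite Rinv_r by lra; lra).
      rewrite rr_eq by (auto; lra || (rewrite Em, Rinv_r; lra)).
      assert (a * m = 1) by (rewrite Em; field; lra). rewrite H3, (inD_1 f Hf).
      unfold Rdiv; rewrite Rmult_0_l. nra. }
  destruct Hend as [e [He1' [He2' [He3 W0]]]].
  assert (Hcont : forall x, 0 <= x <= e -> continuity_pt (rr f a) x) by (intros; apply rr_cont; auto; lra).
  assert (Hder : forall x, 0 < x < e -> rd (rr f a) x (dr f a x) /\ rc_at (dr f a) x).
  { intros x Hx. assert (a * x < 1).
    { assert (a * x < a * m) by (apply Rmult_lt_compat_l; lra). lra. }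
    split; [apply rr_rd; auto; lra| apply dr_rc; auto; lra]. }
  assert (Build : forall b' p1 q1 p2 q2 p3 q3 x1 x2 x3, 0 <= p1 -> q1 <= p2 -> q2 <= p3 -> q3 <= e ->
    clean (rr f a) b' p1 q1 x1 -> clean (rr f a) b' p2 q2 x2 -> clean (rr f a) b' p3 q3 x3 ->
    has_switches (Df f a b') 0 m 3).
  { intros b' p1 q1 p2 q2 p3 q3 x1 x2 x3 Q1 Q2 Q3 Q4 K1 K2 K3.
    assert (Hx1 := proj1 K1). assert (Hx2 := proj1 K2). assert (Hx3 := proj1 K3).
    exists ((x1, x1) :: (x2, x2) :: (x3, x3) :: nil). split; [|split; [reflexivity|]].
    - constructor; [simpl; intros [E|[E|E]]; [injection E; lra| injection E; lra| exact E]|].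
      constructor; [simpl; intros [E|E]; [injection E; lra| exact E]|].
      constructor; [simpl; auto| constructor].
    - constructor; [simpl; apply (clean_switch b' p1 q1 x1 e); auto; lra|].
      constructor; [simpl; apply (clean_switch b' p2 q2 x2 e); auto; lra|].
      constructor; [simpl; apply (clean_switch b' p3 q3 x3 e); auto; lra|].
      constructor. }
  destruct (parity _ _ _ _ _ _ W0 W1 W2) as [C|[C|C]].
  - destruct (triple (rr f a) (dr f a) 0 e b 0 u1 u1 v1 u2 v2 Hcont Hder Hb) as [b' [Hb' [x1 [x2 [x3 [K1 [K2 K3]]]]]]];
      try lra; auto.
    exists b'. split; auto. apply (Build b' 0 u1 u1 v1 u2 v2 x1 x2 x3); auto; lra.
  - destruct (triple (rr f a) (dr f a) 0 e b u1 v1 v1 u2 u2 v2 Hcont Hder Hb) as [b' [Hb' [x1 [x2 [x3 [K1 [K2 K3]]]]]]];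
      try lra; auto.
    exists b'. split; auto. apply (Build b' u1 v1 v1 u2 u2 v2 x1 x2 x3); auto; lra.
  - destruct (triple (rr f a) (dr f a) 0 e b u1 v1 u2 v2 v2 e Hcont Hder Hb) as [b' [Hb' [x1 [x2 [x3 [K1 [K2 K3]]]]]]];
      try lra; auto.
    exists b'. split; auto. apply (Build b' u1 v1 u2 v2 v2 e x1 x2 x3); auto; lra.
Qed.
End Core.

Lemma no_self (f g : R -> R) : inD f -> (forall x, 0 <= x <= 1 -> g x = f x) -> crossing f g = Finite 2 -> False.
Proof.
  intros Hf Hgf Hc. unfold crossing in Hc.
  set (E := fun r => exists (n : nat) (a b : R), 0 < a /\ 0 < b /\ r = INR n /\
     has_switches (fun x => fscale f a x - b * g x) 0 (Rmin 1 (/ a)) n) in *.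
  destruct (Lub_Rbar_correct E) as [Hub Hlub]. rewrite Hc in Hub, Hlub.
  assert (Ex : exists (n : nat) a b, 0 < a /\ 0 < b /\ (2 <= n)%nat /\
     has_switches (fun x => fscale f a x - b * g x) 0 (Rmin 1 (/ a)) n).
  { destruct (classic (exists (n : nat) a b, 0 < a /\ 0 < b /\ (2 <= n)%nat /\
     has_switches (fun x => fscale f a x - b * g x) 0 (Rmin 1 (/ a)) n)) as [|Hno]; auto.
    exfalso. assert (K : Rbar_le (Finite 2) (Finite 1)); [|simpl in K; lra].
    apply Hlub. intros r [n [a [b [Ha [Hb [-> Hs]]]]]]. simpl.
    destruct (Compare_dec.le_lt_dec 2 n) as [Hn|Hn].
    - exfalso; apply Hno. exists n, a, b. auto.
    - replace 1 with (INR 1) by reflexivity. apply le_INR. lia. }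
  destruct Ex as [n [a [b [Ha [Hb [Hn [l [Hnd [Hl Hfa]]]]]]]]].
  destruct (m_facts a Ha) as [Hm _].
  set (m := Rmin 1 (/ a)) in *.
  assert (Eq : forall b0 x, 0 <= x <= m -> (fun x => fscale f a x - b0 * g x) x = Df f a b0 x).
  { intros b0 x Hx. unfold Df. rewrite Hgf by lra. reflexivity. }
  destruct l as [|[c1 d1] [|[c2 d2] rest]]; simpl in Hl; try lia.
  inversion Hnd as [|? ? Hnin Hnd']. subst.
  assert (Hne : (c1, d1) <> (c2, d2)) by (intro E'; apply Hnin; left; auto).
  inversion Hfa as [|? ? S1 Hfa']. subst. inversion Hfa' as [|? ? S2 _]. subst. simpl in S1, S2.
  apply (sw_ext _ (Df f a b)) in S1; [|intros; apply Eq; auto].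
  apply (sw_ext _ (Df f a b)) in S2; [|intros; apply Eq; auto].
  assert (Hb3 : exists b', 0 < b' /\ has_switches (Df f a b') 0 m 3).
  { destruct (sw_disj _ _ _ _ _ _ _ S1 S2 Hne) as [O|O].
    - apply (core3 f Hf a Ha b c1 d1 c2 d2); auto.
    - apply (core3 f Hf a Ha b c2 d2 c1 d1); auto. }
  destruct Hb3 as [b' [Hb' H3]].
  assert (K : Rbar_le (Finite 3) (Finite 2)); [|simpl in K; lra].
  apply Hub. exists 3%nat, a, b'. split; auto. split; auto. split; [simpl; ring|].
  apply (hs_ext (Df f a b')); auto. intros x Hx. symmetry. apply Eq; auto.
Qed.

Lemma cpt_abs (k : R -> R) x : continuity_pt k x -> continuity_pt (fun y => Rabs (k y)) x.
Proof. intros H. apply (continuity_pt_comp k Rabs x H (Rcontinuity_abs _)). Qed.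

Lemma RI_lt_pt (k1 k2 : R -> R) t0 : (forall x, continuity_pt k1 x) -> (forall x, continuity_pt k2 x) ->
  (forall t, 0 < t < 1 -> k1 t <= k2 t) -> 0 < t0 < 1 -> k1 t0 < k2 t0 ->
  RInt k1 0 1 < RInt k2 0 1.
Proof.
  intros H1 H2 Hle Ht0 Hlt.
  set (k := fun y => k2 y - k1 y).
  assert (Hk : continuity_pt k t0) by (apply continuity_pt_minus; auto).
  destruct (cpt_eps_inv k t0 Hk (k t0) ltac:(unfold k; lra)) as [d [Hd Hdd]].
  set (e := Rmin (d/2) (Rmin (t0/2) ((1 - t0)/2))).
  assert (He : 0 < e /\ e <= d/2 /\ e <= t0/2 /\ e <= (1-t0)/2).
  { unfold e, Rmin; repeat destruct Rle_dec; lra. }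
  set (a := t0 - e). set (b := t0 + e).
  rewrite <- (RI_chasles k1 0 a 1), <- (RI_chasles k1 a b 1) by auto.
  rewrite <- (RI_chasles k2 0 a 1), <- (RI_chasles k2 a b 1) by auto.
  assert (A1 : RInt k1 0 a <= RInt k2 0 a) by (apply RI_le; auto; [unfold a; lra| intros; apply Hle; unfold a in *; lra]).
  assert (A3 : RInt k1 b 1 <= RInt k2 b 1) by (apply RI_le; auto; [unfold b; lra| intros; apply Hle; unfold b in *; lra]).
  assert (A2 : RInt k1 a b < RInt k2 a b).
  { apply RInt_lt; [unfold a, b; lra| intros; apply cont_of_cpt; auto| intros; apply cont_of_cpt; auto|].
    intros x Hx. specialize (Hdd x). unfold k in Hdd.
    assert (Rabs (x - t0) < d) by (unfold a, b in Hx; apply Rabs_def1; lra).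
    specialize (Hdd H). apply Rabs_def2 in Hdd. lra. }
  lra.
Qed.

Lemma closure0 (k : R -> R) : continuity_pt k 0 -> (forall t, 0 < t < 1 -> k t = 0) -> k 0 = 0.
Proof.
  intros Hk H. destruct (Req_dec (k 0) 0) as [|Hn]; auto. exfalso.
  destruct (cpt_eps_inv k 0 Hk (Rabs (k 0)) (Rabs_pos_lt _ Hn)) as [d [Hd Hdd]].
  set (t := Rmin (d/2) (1/2)).
  assert (0 < t < 1 /\ t < d) by (unfold t, Rmin; destruct Rle_dec; lra).
  specialize (Hdd t ltac:(rewrite Rminus_0_r, Rabs_right; lra)).
  rewrite H in Hdd by lra. rewrite Rminus_0_l, Rabs_Ropp in Hdd. lra.
Qed.

Lemma RI_clamp (f : R -> R) : inD f -> RInt f 0 1 = RInt (fcl f) 0 1.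
Proof. intros Hf. apply RInt_ext. intros x Hx. rewrite Rmin_left, Rmax_right in Hx by lra. rewrite fcl_eq; auto; lra. Qed.
Lemma RI_clamph (f : R -> R) : inD f -> RInt (finv f) 0 1 = RInt (hcl f) 0 1.
Proof. intros Hf. apply RInt_ext. intros x Hx. rewrite Rmin_left, Rmax_right in Hx by lra. rewrite hcl_eq; auto; lra. Qed.

Lemma RI_zero a b : RInt (fun _ => 0) a b = 0.
Proof. rewrite RI_const. apply Rmult_0_r. Qed.

Lemma RI_posF (f : R -> R) : inD f -> 0 < RInt f 0 1.
Proof.
  intros Hf. rewrite RI_clamp by auto. apply Rle_lt_trans with (RInt (fun _ => 0) 0 1); [rewrite RI_zero; lra|].
  apply (RI_lt_pt _ _ (1/2)); [intros; apply cpt_const| intros; apply fcl_cont; auto| | lra |].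
  - intros t Ht. rewrite fcl_eq by (auto; lra). apply inD_range; auto; lra.
  - rewrite fcl_eq by (auto; lra). apply inD_pos; auto; lra.
Qed.


Theorem main_thm (ft f g : R -> R) :
  inD ft -> inD f -> inD g ->
  dominated g f ->
  (forall x, 0 <= x <= 1 -> ft x <= f x) ->
  (let c := RInt f 0 1 / RInt g 0 1 in
   forall x, 0 <= x <= 1 -> ft x <= g (x / c)) ->
  RInt (T f) 0 1 - RInt (T g) 0 1 < 1 - RInt ft 0 1 / RInt f 0 1.
Proof.
  intros Hft Hf Hg Hdom Hle Hc. simpl in Hc.
  set (F := RInt f 0 1) in *. set (G := RInt g 0 1) in *. set (Ft := RInt ft 0 1).
  set (c := F / G) in *.
  assert (HF : 0 < F) by (apply RI_posF; auto).
  assert (HG : 0 < G) by (apply RI_posF; auto).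
  assert (HGF : G <= F).
  { unfold F, G. rewrite (RI_clamp f Hf), (RI_clamp g Hg). apply RI_le; [lra| intros; apply fcl_cont; auto| intros; apply fcl_cont; auto|].
    intros t Ht. rewrite !fcl_eq by (auto; lra). apply Hdom; lra. }
  assert (Hc1 : 1 <= c).
  { unfold c. apply (Rmult_le_reg_r G); auto. unfold Rdiv. rewrite Rmult_assoc, Rinv_l by lra. lra. }
  set (hf := hcl f). set (hg := hcl g). set (ht := hcl ft).
  assert (Chf : forall x, continuity_pt hf x) by (intro; apply hcl_cont; auto).
  assert (Chg : forall x, continuity_pt hg x) by (intro; apply hcl_cont; auto).
  assert (Cht : forall x, continuity_pt ht x) by (intro; apply hcl_cont; auto).
  assert (EF : F = RInt hf 0 1) by (unfold F; rewrite int_inv by auto; apply RI_clamph; auto).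
  assert (EG : G = RInt hg 0 1) by (unfold G; rewrite int_inv by auto; apply RI_clamph; auto).
  assert (EFt : Ft = RInt ht 0 1) by (unfold Ft; rewrite int_inv by auto; apply RI_clamph; auto).
  assert (P1 : forall y, 0 < y < 1 -> ht y <= hf y).
  { intros y Hy. unfold ht, hf. rewrite !hcl_eq by (auto; lra).
    destruct (finv_spec ft Hft y ltac:(lra)) as [Hx Hfx].
    destruct (finv_spec f Hf y ltac:(lra)) as [Hx' Hfx'].
    destruct (Rle_dec (finv ft y) (finv f y)) as [|Hn]; auto.
    assert (f (finv ft y) < f (finv f y)) by (apply inD_dec; auto; lra).
    pose proof (Hle (finv ft y) Hx). lra. }
  assert (P2 : forall y, 0 < y < 1 -> ht y <= c * hg y).
  { intros y Hy. unfold ht, hg. rewrite !hcl_eq by (auto; lra).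
    destruct (finv_spec ft Hft y ltac:(lra)) as [Hx Hfx].
    destruct (finv_spec g Hg y ltac:(lra)) as [Hx' Hfx'].
    set (x := finv ft y) in *. set (z := finv g y) in *.
    assert (Hxc : 0 <= x / c <= 1).
    { split. apply Rdiv_le_0_compat; lra. apply (Rmult_le_reg_r c); [lra|].
      unfold Rdiv; rewrite Rmult_assoc, Rinv_l, Rmult_1_r by lra. nra. }
    destruct (Rle_dec (x / c) z) as [Hn|Hn].
    - apply (Rmult_le_compat_l c) in Hn; [|lra]. unfold Rdiv in Hn.
      rewrite <- Rmult_assoc, (Rmult_comm c x), Rmult_assoc, Rinv_r, Rmult_1_r in Hn by lra. exact Hn.
    - assert (g (x / c) < g z) by (apply inD_dec; auto; lra).
      pose proof (Hc x Hx). lra. }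
  set (mn := fun y => (hf y + c * hg y - Rabs (hf y - c * hg y)) / 2).
  assert (Cmn : forall x, continuity_pt mn x).
  { intros x. unfold mn. apply continuity_pt_div; [| apply cpt_const | lra].
    apply continuity_pt_minus; [apply continuity_pt_plus; auto|].
    - apply continuity_pt_mult; auto. apply cpt_const.
    - apply cpt_abs. apply continuity_pt_minus; auto. apply continuity_pt_mult; auto. apply cpt_const. }
  assert (HMn : Ft <= RInt mn 0 1).
  { rewrite EFt. apply RI_le; auto; [lra|]. intros t Ht. unfold mn.
    specialize (P1 t Ht). specialize (P2 t Ht). unfold Rabs; destruct Rcase_abs; lra. }
  set (A := RInt (fun y => y * hf y) 0 1). set (B := RInt (fun y => y * hg y) 0 1).
  assert (TF : RInt (T f) 0 1 = A / F) by (apply intT; auto).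
  assert (TG : RInt (T g) 0 1 = B / G) by (apply intT; auto).
  assert (Cyf : forall x, continuity_pt (fun y => y * hf y) x) by (intro; apply continuity_pt_mult; auto; apply continuity_pt_id).
  assert (Cyg : forall x, continuity_pt (fun y => y * hg y) x) by (intro; apply continuity_pt_mult; auto; apply continuity_pt_id).
  set (k1 := fun y => y * hf y - c * (y * hg y)).
  set (k2 := fun y => hf y - mn y).
  assert (Ck1 : forall x, continuity_pt k1 x).
  { intros x; unfold k1; apply continuity_pt_minus; auto. apply continuity_pt_mult; auto; apply cpt_const. }
  assert (Ck2 : forall x, continuity_pt k2 x) by (intros x; unfold k2; apply continuity_pt_minus; auto).
  assert (I1 : RInt k1 0 1 = A - c * B).
  { assert (Cc : forall x, continuity_pt (fun y => c * (y * hg y)) x) by (intro; apply continuity_pt_mult; auto; apply cpt_const).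
    assert (S1 : RInt (fun y => c * (y * hg y)) 0 1 = c * B) by exact (RInt_scal _ 0 1 c (exRI _ 0 1 Cyg)).
    assert (S2 : RInt k1 0 1 = A - RInt (fun y => c * (y * hg y)) 0 1) by exact (RInt_minus _ _ 0 1 (exRI _ 0 1 Cyf) (exRI _ 0 1 Cc)).
    rewrite S2, S1. reflexivity. }
  assert (I2 : RInt k2 0 1 = F - RInt mn 0 1).
  { assert (S2 : RInt k2 0 1 = RInt hf 0 1 - RInt mn 0 1) by exact (RInt_minus _ _ 0 1 (exRI _ 0 1 Chf) (exRI _ 0 1 Cmn)).
    rewrite S2, EF. reflexivity. }
  assert (Key : A - c * B < F - RInt mn 0 1).
  { rewrite <- I1, <- I2.
    destruct (classic (exists t0, 0 < t0 < 1 /\ hf t0 <> c * hg t0)) as [[t0 [Ht0 Hne]]|Hno].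
    - apply (RI_lt_pt k1 k2 t0); auto.
      + intros t Ht. unfold k1, k2, mn. unfold Rabs; destruct Rcase_abs; nra.
      + unfold k1, k2, mn. unfold Rabs; destruct Rcase_abs.
        * assert (hf t0 < c * hg t0) by lra. nra.
        * assert (hf t0 > c * hg t0) by lra. nra.
    - exfalso.
      assert (Hall : forall t, 0 < t < 1 -> hf t = c * hg t).
      { intros t Ht. destruct (Req_dec (hf t) (c * hg t)); auto. exfalso; apply Hno; exists t; auto. }
      assert (H0 : hf 0 - c * hg 0 = 0).
      { apply (closure0 (fun t => hf t - c * hg t)).
        - apply continuity_pt_minus; auto. apply continuity_pt_mult; auto. apply cpt_const.
        - intros t Ht. rewrite Hall; auto; ring. }
      unfold hf, hg in H0. rewrite !hcl_eq in H0 by lra. rewrite !finv_0 in H0 by auto.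
      assert (Ec : c = 1) by lra.
      apply (no_self f g Hf); [| apply Hdom].
      intros x Hx. pose proof (inD_range f Hf x Hx) as Hy.
      destruct (Req_dec (f x) 0) as [E0|E0].
      + assert (x = 1) by (apply (inD_inj f Hf); auto; [lra| rewrite inD_1; auto]).
        subst x. rewrite E0, inD_1; auto.
      + destruct (Req_dec (f x) 1) as [E1|E1].
        * assert (x = 0) by (apply (inD_inj f Hf); auto; [lra| rewrite inD_0; auto]).
          subst x. rewrite E1, inD_0; auto.
        * specialize (Hall (f x) ltac:(lra)). unfold hf, hg in Hall.
          rewrite !hcl_eq in Hall by lra. rewrite finv_f in Hall by auto. rewrite Ec, Rmult_1_l in Hall.
          destruct (finv_spec g Hg (f x) ltac:(lra)) as [_ Hgx]. rewrite <- Hall in Hgx. exact Hgx. }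
  rewrite TF, TG.
  assert (EB : B / G = c * B / F) by (unfold c; field; lra).
  rewrite EB.
  assert (A / F - c * B / F = (A - c * B) / F) by (field; lra).
  assert (1 - Ft / F = (F - Ft) / F) by (field; lra).
  rewrite H, H0. apply Rmult_lt_compat_r; [apply Rinv_0_lt_compat; lra| lra].
Qed.

Theorem lemma4p6 (ft f g : R -> R) :
  inD ft -> inD f -> inD g ->
  dominated g f ->
  (forall x, 0 <= x <= 1 -> ft x <= f x) ->
  (let c := RInt f 0 1 / RInt g 0 1 in
   forall x, 0 <= x <= 1 -> ft x <= g (x / c)) ->
  RInt (T f) 0 1 - RInt (T g) 0 1 < 1 - RInt ft 0 1 / RInt f 0 1.
Proof.
  exact (main_thm ft f g).
Qed.
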